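(* Let $f$ satisfy conditions (1) and (2a), let $a,p>0$ and $x,y\in\mathbb{R}$. In the expression \[ a\,e^{-p(x^2+y^2)}\int_0^\infty\!\!\int_0^{2\pi} f(r')\,e^{-pr'^2}\sum_{n=0}^\infty(2p)^n\sum_{i=0}^n\frac{x^{n-i}y^i}{(n-i)!\,i!}\,r'^n\cos^{n-i}\varphi'\sin^i\varphi'\;r'\,d\varphi'\,dr' \] the order of summation and integration may be reversed, for arbitrary values of $p$ and $r=\sqrt{x^2+y^2}$.
   Context: $f:[0,\infty)\to\mathbb{R}$; $c_n=2\pi\int_0^\infty f(r)\,r^{n+1}dr$. Condition (1): there is a constant $F$ with $0\le f(r)\le F$ for all $r\ge0$, $c_0$ exists and $c_0>0$. Condition (2a): $c_{2n}$ exists for all $n\in\mathbb{N}_0$ and $c_n^{1/n}=o(n)$ as $n\to\infty$. *)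

(* Defs.v *)
From HB Require Import structures.
From mathcomp Require Import all_boot all_order all_algebra.
From mathcomp Require Import all_classical all_reals all_analysis.
Set Implicit Arguments. Unset Strict Implicit. Unset Printing Implicit Defensive.
Import Order.TTheory GRing.Theory Num.Theory numFieldNormedType.Exports.
Local Open Scope classical_set_scope.
Local Open Scope ring_scope.

Section defs.
Context {R : realType}.

Definition halfline : set R := `[0%R, +oo[%classic.

Definition cmom (f : R -> R) (n : nat) : R :=
  2 * pi * Rintegral lebesgue_measure halfline (fun r => f r * r ^+ n.+1).

Definition cond1 (f : R -> R) : Prop :=
  (exists F : R, forall r, 0 <= r -> 0 <= f r <= F) /\
  lebesgue_measure.-integrable halfline (fun r => (f r * r ^+ 1)%:E) /\
  0 < cmom f 0.

Definition cond2a (f : R -> R) : Prop :=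
  (forall n : nat,
     lebesgue_measure.-integrable halfline (fun r => (f r * r ^+ (2 * n).+1)%:E)) /\
  (fun n : nat => cmom f n `^ (n%:R^-1) / n%:R) @ \oo --> (0 : R).

Definition dom : set (R * R) := halfline `*` `[0%R, 2 * pi]%classic.

Definition leb2 := (@lebesgue_measure R \x @lebesgue_measure R)%E.

(* n-th summand of the integrand (including the Jacobian factor r') *)
Definition term (f : R -> R) (p x y : R) (n : nat) (z : R * R) : R :=
  f z.1 * expR (- p * z.1 ^+ 2) *
  ((2 * p) ^+ n *
   \sum_(i < n.+1) (x ^+ (n - i) * y ^+ i / ((n - i)`!%:R * i`!%:R)
                    * z.1 ^+ n * cos z.2 ^+ (n - i) * sin z.2 ^+ i))
  * z.1.

End defs.

(* Main.v *)
Require Import Defs.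
From HB Require Import structures.
From mathcomp Require Import all_boot all_order all_algebra.
From mathcomp Require Import all_classical all_reals all_analysis.
From mathcomp Require Import ring lra measurable_realfun.
Import Order.TTheory GRing.Theory Num.Theory numFieldNormedType.Exports.
Local Open Scope classical_set_scope.
Local Open Scope ring_scope.
Section Aux.
Variable R : realType.

Lemma binom_fact (u v : R) n :
  \sum_(i < n.+1) u ^+ (n - i) * v ^+ i / ((n - i)`!%:R * i`!%:R) =
  (u + v) ^+ n / n`!%:R.
Proof.
rewrite exprDn mulr_suml; apply: eq_bigr => i _.
have hi : (i <= n)%N by rewrite -ltnS.
have := bin_fact hi => /(congr1 (fun k => k%:R : R)).
rewrite !natrM => E.
have h1 : (n`!%:R : R) != 0 by rewrite pnatr_eq0 -lt0n fact_gt0.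
have h2 : ((n - i)`!%:R : R) != 0 by rewrite pnatr_eq0 -lt0n fact_gt0.
have h3 : (i`!%:R : R) != 0 by rewrite pnatr_eq0 -lt0n fact_gt0.
have h4 : ('C(n, i)%:R : R) != 0 by rewrite pnatr_eq0 -lt0n bin_gt0.
rewrite -E -[_ *+ 'C(n,i)]mulr_natr; field.
by rewrite h2 h3 h4.
Qed.

Lemma expc_le_expR (t : R) n : 0 <= t -> exp_coeff t n <= expR t.
Proof.
move=> t0; rewrite /exp_coeff /=.
case: n => [|n].
  by rewrite expr0 fact0 divr1 (le_trans _ (expR_ge1Dx t)) // lerDl.
by rewrite (le_trans _ (expR_ge1Dxn n t0)) // lerDr.
Qed.

Lemma series_expc_le (t : R) N : 0 <= t -> series (exp_coeff t) N <= expR t.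
Proof.
move=> t0; apply: (nondecreasing_cvgn_le _ (is_cvg_series_exp_coeff t)).
by apply: nondecreasing_series => n _ _; exact: exp_coeff_ge0.
Qed.
End Aux.
Section T.
Variable R : realType.
Implicit Types (f : R -> R) (p x y : R).

Lemma term_bound f p x y n (z : R * R) : 0 <= z.1 -> 0 <= f z.1 -> 0 < p ->
  `|term f p x y n z| <=
  f z.1 * z.1 * expR (- p * z.1 ^+ 2) * exp_coeff (2 * p * z.1 * (`|x| + `|y|)) n.
Proof.
move=> r0 f0 p0; rewrite /term.
set r := z.1; set c := cos z.2; set s := sin z.2.
set S := \sum_(i < n.+1) _.
have -> : f r * expR (- p * r ^+ 2) * ((2 * p) ^+ n * S) * r =
   (f r * r * expR (- p * r ^+ 2)) * ((2 * p) ^+ n * S) by ring.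
rewrite normrM ger0_norm; last by rewrite mulr_ge0 ?expR_ge0 // mulr_ge0.
apply: ler_wpM2l; first by rewrite mulr_ge0 ?expR_ge0 // mulr_ge0.
rewrite normrM normrX ger0_norm; last by rewrite mulr_ge0 // ltW.
have HS : `|S| <= r ^+ n * ((`|x| + `|y|) ^+ n / n`!%:R).
  rewrite -binom_fact mulr_sumr (le_trans (ler_norm_sum _ _ _)) //.
  apply: ler_sum => i _.
  have hf : 0 < (n - i)`!%:R * i`!%:R :> R by rewrite mulr_gt0 // ltr0n fact_gt0.
  set A := `|x| ^+ (n - i) * `|y| ^+ i / ((n - i)`!%:R * i`!%:R).
  have A0 : 0 <= A by rewrite /A divr_ge0 ?mulr_ge0 ?exprn_ge0 // ltW.
  have -> : `|x ^+ (n - i) * y ^+ i / ((n - i)`!%:R * i`!%:R) * r ^+ n *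
       c ^+ (n - i) * s ^+ i| = A * r ^+ n * (`|c| ^+ (n - i) * `|s| ^+ i).
    rewrite !normrM !normrX normfV (ger0_norm (ltW hf)) (ger0_norm r0) /A.
    by rewrite !mulrA.
  have hc : `|c| ^+ (n - i) <= 1 by rewrite exprn_ile1 // cos_max.
  have hs : `|s| ^+ i <= 1 by rewrite exprn_ile1 // sin_max.
  rewrite [r ^+ n * A]mulrC -[X in _ <= X]mulr1; apply: ler_wpM2l.
    by rewrite mulr_ge0 // exprn_ge0.
  by rewrite -[1]mulr1; apply: ler_pM => //; rewrite exprn_ge0.
apply: (le_trans (ler_wpM2l _ HS)); first by rewrite exprn_ge0 // mulr_ge0 // ltW.
by rewrite /exp_coeff /= !exprMn !mulrA.
Qed.

Lemma Aexp_le f p x y (r : R) : 0 <= r -> 0 <= f r -> 0 < p ->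
  f r * r * expR (- p * r ^+ 2) * expR (2 * p * r * (`|x| + `|y|)) <=
  f r * r * expR (p * (`|x| + `|y|) ^+ 2).
Proof.
move=> r0 f0 p0; rewrite -mulrA -expRD; apply: ler_wpM2l; first exact: mulr_ge0.
rewrite ler_expR; set S := `|x| + `|y|.
have : 0 <= p * (r - S) ^+ 2 by rewrite mulr_ge0 ?sqr_ge0 // ltW.
move=> h; rewrite -subr_ge0; apply: (le_trans h); rewrite le_eqVlt; apply/orP; left.
apply/eqP; ring.
Qed.

Lemma term_le f p x y n (z : R * R) : 0 <= z.1 -> 0 <= f z.1 -> 0 < p ->
  `|term f p x y n z| <= f z.1 * z.1 * expR (p * (`|x| + `|y|) ^+ 2).
Proof.
move=> r0 f0 p0; apply: (le_trans (term_bound f p x y n z r0 f0 p0)).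
apply: le_trans (Aexp_le f p x y z.1 r0 f0 p0); apply: ler_wpM2l.
  by rewrite mulr_ge0 ?expR_ge0 // mulr_ge0.
by apply: expc_le_expR; rewrite mulr_ge0 ?addr_ge0 // mulr_ge0 // mulr_ge0 // ltW.
Qed.

Lemma psum_le f p x y N (z : R * R) : 0 <= z.1 -> 0 <= f z.1 -> 0 < p ->
  `|series (fun n => term f p x y n z) N| <= f z.1 * z.1 * expR (p * (`|x| + `|y|) ^+ 2).
Proof.
move=> r0 f0 p0; rewrite /series /=.
apply: (le_trans (ler_norm_sum _ _ _)).
apply: (le_trans (ler_sum _ (fun n _ => term_bound f p x y n z r0 f0 p0))).
rewrite -mulr_sumr; apply: le_trans (Aexp_le f p x y z.1 r0 f0 p0); apply: ler_wpM2l.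
  by rewrite mulr_ge0 ?expR_ge0 // mulr_ge0.
by apply: series_expc_le; rewrite mulr_ge0 ?addr_ge0 // mulr_ge0 // mulr_ge0 // ltW.
Qed.

Lemma term_cvg f p x y (z : R * R) : 0 <= z.1 -> 0 <= f z.1 -> 0 < p ->
  cvgn (series (fun n => term f p x y n z)).
Proof.
move=> r0 f0 p0; apply: normed_cvg.
set A := f z.1 * z.1 * expR (- p * z.1 ^+ 2).
set t := 2 * p * z.1 * (`|x| + `|y|).
have A0 : 0 <= A by rewrite mulr_ge0 ?expR_ge0 // mulr_ge0.
have t0 : 0 <= t by rewrite mulr_ge0 ?addr_ge0 // mulr_ge0 // mulr_ge0 // ltW.
apply: (@series_le_cvg _ _ (A *: exp_coeff t)).
- by move=> n; rewrite /= normr_ge0.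
- by move=> n; rewrite /= mulr_ge0 // exp_coeff_ge0.
- by move=> n; exact: term_bound.
- by apply: is_cvg_seriesZ; exact: is_cvg_series_exp_coeff.
Qed.
End T.
Section M.
Variable R : realType.
Implicit Types (f : R -> R) (p x y : R).

Definition phi p x y n (z : R * R) : R :=
  expR (- p * z.1 ^+ 2) *
  ((2 * p) ^+ n *
   \sum_(i < n.+1) (x ^+ (n - i) * y ^+ i / ((n - i)`!%:R * i`!%:R)
                    * z.1 ^+ n * cos z.2 ^+ (n - i) * sin z.2 ^+ i)).

Lemma termE f p x y n z : term f p x y n z = (f z.1 * z.1) * phi p x y n z.
Proof. rewrite /term /phi; ring. Qed.

Lemma meas_phi p x y n : measurable_fun setT (phi p x y n).
Proof.
apply: measurable_funM.
  apply: measurableT_comp; first exact: continuous_measurable_fun (@continuous_expR R).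
  apply: measurable_funM; first exact: measurable_cst.
  by apply: measurable_funX; exact: measurable_fst.
apply: measurable_funM; first exact: measurable_cst.
apply: measurable_sum => i.
apply: measurable_funM; last first.
  apply: measurable_funX; apply: measurableT_comp; first exact: continuous_measurable_fun (@continuous_sin R).
  exact: measurable_snd.
apply: measurable_funM; last first.
  apply: measurable_funX; apply: measurableT_comp; first exact: continuous_measurable_fun (@continuous_cos R).
  exact: measurable_snd.
apply: measurable_funM; first exact: measurable_cst.
by apply: measurable_funX; exact: measurable_fst.
Qed.

Lemma mhalfline : measurable (halfline : set R).
Proof. exact: measurable_itv. Qed.
Lemma mhalfline2 : measurable (halfline : set (measurableTypeR R)).
Proof. exact: mhalfline. Qed.

Lemma mdom1 : measurable (dom : set (R * R)).
Proof. by apply: measurableX; exact: measurable_itv. Qed.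
Lemma mdom : measurable (dom : set (measurableTypeR R * measurableTypeR R)).
Proof. exact: mdom1. Qed.

Lemma meas_h f : cond1 f -> measurable_fun halfline (fun r => f r * r).
Proof.
move=> [_ [/measurable_int/measurable_EFinP h _]].
by under eq_fun do rewrite -[X in _ * X]expr1.
Qed.

Lemma meas_hfst f : cond1 f -> measurable_fun dom (fun z : R * R => f z.1 * z.1).
Proof.
move=> c1; have := meas_h f c1; rewrite (measurable_restrictT _ mhalfline) => mh.
have := measurable_funS measurableT (@subsetT _ dom) (measurableT_comp mh (@measurable_fst _ _ R R)).
apply: eq_measurable_fun => z; rewrite inE => -[hz _].
by rewrite /= patchE mem_set.
Qed.

Lemma meas_term f p x y n : cond1 f -> measurable_fun dom (term f p x y n).
Proof.
move=> c1; rewrite (_ : term f p x y n = fun z => (f z.1 * z.1) * phi p x y n z).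
  apply: measurable_funM; first exact: meas_hfst.
  exact: measurable_funS measurableT (@subsetT _ dom) (meas_phi p x y n).
by apply/funext => z; rewrite termE.
Qed.

Lemma meas_psum f p x y N : cond1 f ->
  measurable_fun dom (fun z => series (fun n => term f p x y n z) N).
Proof.
by move=> c1; rewrite /series /=; apply: measurable_sum => n; exact: meas_term.
Qed.

Local Open Scope ereal_scope.
Lemma int_hfst f : cond1 f -> leb2.-integrable dom (fun z : R * R => (f z.1 * z.1)%:E).
Proof.
move=> c1; apply/(integrable_mkcond _ mdom).
have mg : measurable_fun setT ((fun z : measurableTypeR R * measurableTypeR R => (f z.1 * z.1)%:E) \_ dom).
  apply/(measurable_restrictT _ mdom); apply/measurable_EFinP; move: (meas_hfst f c1) => h; exact: h.
rewrite /leb2; apply/integrable12ltyP => //.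
have p2 : (0 < 2 * pi :> R)%R by rewrite mulr_gt0 // pi_gt0.
pose H := ((fun r : measurableTypeR R => (`|f r * r| * (2 * pi))%:E) \_ (halfline : set (measurableTypeR R))).
match goal with |- is_true (Order.lt ?I _) => have -> : I = \int[lebesgue_measure]_x (H x) end.
  apply: eq_integral => x _; rewrite /H patchE; case: (pselect (halfline x)) => hx.
    rewrite mem_set //.
    transitivity (\int[lebesgue_measure]_(y in `[0%R, (2 * pi)%R]%classic) (`|f x * x|)%:E).
      rewrite [RHS]integral_mkcond; apply: eq_integral => y _; rewrite !patchE.
      have -> : ((x, y) \in dom) = (y \in `[0%R, (2 * pi)%R]%classic).
        apply/idP/idP; rewrite !in_setE /dom /=; first by case.
        by move=> hy; split.
      by case: (_ \in _) => //=; rewrite normr0.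
    rewrite integral_cst /=; last exact: measurable_itv.
    rewrite lebesgue_measure_itv /= lte_fin p2 -EFinD subr0.
    by rewrite -EFinM.
  rewrite memNset //; apply: integral0_eq => y _; rewrite patchE memNset /=; first by rewrite normr0.
  by move=> [].
rewrite -integral_mkcond.
have [_ [hi _]] := c1.
have := integrableZr mhalfline2 (2 * pi)%R hi.
move/integrableP => [_]; apply: le_lt_trans; rewrite le_eqVlt; apply/orP; left; apply/eqP.
by apply: eq_integral => r _ /=; rewrite expr1 [X in _ = X%:E]normrM [X in _ = (_ * X)%:E](ger0_norm (ltW p2)).
Qed.
End M.

Theorem lemma5 (R : realType) (f : R -> R) (a p x y : R) :
  cond1 f -> cond2a f -> 0 < a -> 0 < p ->
  (forall n : nat, leb2.-integrable dom (fun z => (term f p x y n z)%:E)) /\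
  (forall z, dom z -> cvgn (series (fun n => term f p x y n z))) /\
  leb2.-integrable dom (fun z => (limn (series (fun n => term f p x y n z)))%:E) /\
  series (fun n => a * expR (- p * (x ^+ 2 + y ^+ 2)) *
                   Rintegral leb2 dom (term f p x y n)) @ \oo -->
    a * expR (- p * (x ^+ 2 + y ^+ 2)) *
    Rintegral leb2 dom (fun z => limn (series (fun n => term f p x y n z))).
Proof.
move=> c1 _ a0 p0.
have [[F hF] [hi _]] := c1.
set C := expR (p * (`|x| + `|y|) ^+ 2).
have Dz : forall z : R * R, dom z -> 0 <= z.1 /\ 0 <= f z.1.
  move=> z [h _]; have r0 : 0 <= z.1.
    by move: h; rewrite /halfline /= in_itv /= andbT.
  by split => //; have /andP[] := hF _ r0.
have iG : leb2.-integrable dom (fun z => (f z.1 * z.1 * C)%:E).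
  have -> : (fun z : R * R => (f z.1 * z.1 * C)%:E) =
    ((fun z : R * R => (f z.1 * z.1)%:E) \* cst C%:E)%E by apply/funext => z; rewrite /= EFinM.
  have h := integrableZr (mdom R) C (int_hfst R f c1). exact: h.
have mterm : forall n, measurable_fun (dom : set (measurableTypeR R * measurableTypeR R)) (fun z => (term f p x y n z)%:E).
  move=> n; apply/measurable_EFinP; move: (meas_term R f p x y n c1) => h; exact: h.
have iterm : forall n, leb2.-integrable dom (fun z => (term f p x y n z)%:E).
  move=> n; apply: le_integrable (mdom R) _ _ (mterm n) _ iG => z hz.
  have [r0 f0] := Dz z hz.
  rewrite !abse_EFin lee_fin [X in _ <= X]ger0_norm; last by rewrite mulr_ge0 ?expR_ge0 // mulr_ge0.
  exact: (term_le R f p x y n z r0 f0 p0).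
have cv : forall z, dom z -> cvgn (series (fun n => term f p x y n z)).
  by move=> z hz; have [r0 f0] := Dz z hz; exact: (term_cvg R f p x y z r0 f0 p0).
pose fN := fun N (z : measurableTypeR R * measurableTypeR R) =>
  (series (fun n => term f p x y n z) N)%:E.
pose fl := fun z : measurableTypeR R * measurableTypeR R =>
  (limn (series (fun n => term f p x y n z)))%:E.
have mfN : forall N, measurable_fun (dom : set (measurableTypeR R * measurableTypeR R)) (fN N).
  move=> N; apply/measurable_EFinP; move: (meas_psum R f p x y N c1) => h; exact: h.
have mfl : measurable_fun (dom : set (measurableTypeR R * measurableTypeR R)) fl.
  apply/measurable_EFinP.
  apply: (measurable_fun_cvg (h := fun N (z : measurableTypeR R * measurableTypeR R) =>
      series (fun n => term f p x y n z) N)).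
    move=> N; move: (meas_psum R f p x y N c1) => h; exact: h.
  by move=> z hz; exact: (cv z hz).
have ae1 : {ae leb2, forall z, dom z -> fN ^~ z @ \oo --> fl z}.
  apply: aeW => z hz; apply: cvg_EFin; first exact: nearW.
  exact: (cv z hz).
have ae2 : {ae leb2, forall z n, dom z -> (`|fN n z| <= (f z.1 * z.1 * C)%:E)%E}.
  apply: aeW => z n hz; rewrite abse_EFin lee_fin.
  have [r0 f0] := Dz z hz; exact: (psum_le R f p x y n z r0 f0 p0).
have [ifl _ hcv] := dominated_convergence (mdom R) mfN mfl ae1 iG ae2.
split => //; split => //; split => //.
have ipsum : forall N, leb2.-integrable dom (fN N).
  move=> N; apply: le_integrable (mdom R) _ _ (mfN N) _ iG => z hz.
  rewrite !abse_EFin lee_fin [X in _ <= X]ger0_norm.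
    have [r0 f0] := Dz z hz; exact: (psum_le R f p x y N z r0 f0 p0).
  have [r0 f0] := Dz z hz; by rewrite mulr_ge0 ?expR_ge0 // mulr_ge0.
have sumE : forall N, \sum_(0 <= k < N) Rintegral leb2 dom (term f p x y k) =
    Rintegral leb2 dom (fun z => series (fun n => term f p x y n z) N).
  elim => [|N IH].
    rewrite big_geq // /Rintegral integral0_eq ?fine0 // => z _.
    by rewrite /series /= big_geq.
  rewrite big_nat_recr //= IH -RintegralD; first last.
  - exact: (iterm N).
  - exact: (ipsum N).
  - exact: (mdom R).
  congr Rintegral; apply/funext => z; rewrite /series /= big_nat_recr //.
set K := a * expR (- p * (x ^+ 2 + y ^+ 2)).
have -> : series (fun n => K * Rintegral leb2 dom (term f p x y n)) =
    fun N => K * Rintegral leb2 dom (fun z => series (fun n => term f p x y n z) N).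
  by apply/funext => N; rewrite /series /= -mulr_sumr sumE.
apply: cvgMr.
rewrite -(fineK (integrable_fin_num (mdom R) ifl)) in hcv.
exact: (fine_cvg hcv).
Qed.
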